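(* Let $\mathcal{G}=\{G_n\}_{n=1}^\infty$ be a graph sequence which is a large girth sequence. Then $e(\mathcal{G})=c(\mathcal{G})$.
   Context: A graph sequence is a sequence $\mathcal{G}=\{G_n\}_{n=1}^\infty$ of finite simple graphs such that $\sup_n \max_{x\in V(G_n)}\deg(x)<\infty$ and $|V(G_n)|\to\infty$. For graph sequences $\mathcal{G},\mathcal{H}$ with $V(H_n)=V(G_n)$ for all $n$, write $\mathcal{H}\prec\mathcal{G}$ if there is an integer $L>0$ such that $d_{G_n}(x,y)\le L\, d_{H_n}(x,y)$ for all $n$ and all $x,y\in V(G_n)$, where $d_{G_n},d_{H_n}$ are the shortest path metrics; $\mathcal{G}\simeq\mathcal{H}$ means $\mathcal{H}\prec\mathcal{G}$ and $\mathcal{G}\prec\mathcal{H}$. The edge number is $e(\mathcal{G})=\liminf_{n\to\infty}|E(G_n)|/|V(G_n)|$ and the cost is $c(\mathcal{G})=\inf_{\mathcal{H}\simeq\mathcal{G}} e(\mathcal{H})$. $\mathcal{G}$ is a large girth sequence if for every $k\ge1$ there is $n_k$ such that for $n\ge n_k$ the graph $G_n$ contains no cycle of length at most $k$. *)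

(* Defs.v *)
From HB Require Import structures.
From mathcomp Require Import all_boot all_order all_algebra.
From mathcomp Require Import all_classical all_reals all_analysis.
Set Implicit Arguments. Unset Strict Implicit. Unset Printing Implicit Defensive.
Import Order.TTheory GRing.Theory Num.Theory.

Definition simple_graph (T : finType) (e : rel T) : Prop :=
  symmetric e /\ irreflexive e.

Definition deg (T : finType) (e : rel T) (x : T) : nat := #|[set y | e x y]|.

Definition graph_seq (V : nat -> finType) (G : forall n, rel (V n)) : Prop :=
  (forall n, simple_graph (G n)) /\
  (exists D : nat, forall n (x : V n), (deg (G n) x <= D)%N) /\
  (forall N : nat, exists n0, forall n, (n0 <= n)%N -> (N <= #|V n|)%N).

(* there is a walk of length at most k from x to y, i.e. d_e(x,y) <= k
   (shortest path metric, with d = +oo between different components) *)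
Definition walk_le (T : finType) (e : rel T) (x y : T) (k : nat) : Prop :=
  exists p : seq T, [/\ path e x p, last x p = y & (size p <= k)%N].

Definition coarse_le (V : nat -> finType) (H G : forall n, rel (V n)) : Prop :=
  exists L : nat, (0 < L)%N /\
    forall n (x y : V n) (k : nat), walk_le (H n) x y k -> walk_le (G n) x y (L * k).

Definition coarse_eq (V : nat -> finType) (G H : forall n, rel (V n)) : Prop :=
  coarse_le H G /\ coarse_le G H.

Definition n_edges (T : finType) (e : rel T) : nat :=
  #|[set A : {set T} | [exists x, exists y, e x y && (A == [set x; y])]]|.

Definition edge_number (R : realType) (V : nat -> finType) (G : forall n, rel (V n))
  : \bar R :=
  limn_einf (fun n => ((n_edges (G n))%:R / (#|V n|)%:R : R)%:E).

Definition cost (R : realType) (V : nat -> finType) (G : forall n, rel (V n))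
  : \bar R :=
  ereal_inf [set edge_number R H | H in
             [set H : forall n, rel (V n) | graph_seq H /\ coarse_eq G H]].

Definition large_girth (V : nat -> finType) (G : forall n, rel (V n)) : Prop :=
  forall k : nat, (1 <= k)%N -> exists nk, forall n, (nk <= n)%N ->
    forall c : seq (V n), uniq c -> cycle (G n) c -> (3 <= size c)%N ->
      (k < size c)%N.

(* Main.v *)
Require Import Defs.
From HB Require Import structures.
From mathcomp Require Import all_boot all_order all_algebra.
From mathcomp Require Import all_classical all_reals all_analysis.
From mathcomp Require Import zify.
Set Implicit Arguments. Unset Strict Implicit. Unset Printing Implicit Defensive.
Import Order.TTheory GRing.Theory Num.Theory.

Local Open Scope ring_scope.
Section Comb.
Variable T : finType.

Definition dl (b c : {set T}) : 'F_2 := (c == b)%:R.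

Fixpoint wv (s : seq T) (c : {set T}) : 'F_2 :=
  match s with
  | [::] => 0
  | x :: t => (if t is y :: _ then dl [set x; y] c else 0) + wv t c
  end.

Lemma F2_double (a : 'F_2) : a + a = 0.
Proof. apply: GRing.addrr_pchar2; exact: pchar_Fp. Qed.

Lemma F2_eq (a b : 'F_2) : a + b = 0 -> a = b.
Proof. by move=> h; rewrite -[b]add0r -h -addrA F2_double addr0. Qed.

Lemma wv1 x c : wv [:: x] c = 0.
Proof. by rewrite /= addr0. Qed.

Lemma wv_cat s1 z u c : wv (s1 ++ z :: u) c = wv (rcons s1 z) c + wv (z :: u) c.
Proof.
elim: s1 => [|a s1 IH] /=; first by rewrite !add0r.
rewrite IH addrA; congr (_ + _); case: s1 {IH} => [|b s1] //=.
Qed.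

Lemma wv_rcons a s z c :
  wv (rcons (a :: s) z) c = wv (a :: s) c + dl [set last a s; z] c.
Proof.
elim: s a => [|b s IH] a /=; first by rewrite !add0r !addr0.
by rewrite -addrA; congr (_ + _); move: (IH b) => /= ->.
Qed.

Lemma wv_rcons' s z c :
  wv (rcons s z) c = wv s c + (if nilp s then 0 else dl [set last z s; z] c).
Proof. by case: s => [|a s]; [rewrite /= !addr0 | rewrite wv_rcons]. Qed.

Lemma wv_rev s c : wv (rev s) c = wv s c.
Proof.
elim: s => [|x t IH] //=; rewrite rev_cons wv_rcons' IH.
case: t IH => [|y t] IH /=; first by rewrite !add0r.
rewrite /nilp size_rev /= rev_cons last_rcons addrC finset.setUC //.
Qed.

Lemma decomp (s : seq T) : ~~ uniq s ->
  exists s1 z s2 s3, s = s1 ++ z :: s2 ++ z :: s3 /\ uniq (z :: s2).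
Proof.
elim: s => [|a t IH] //= /nandP [/negbNE ain|nu].
  case: (boolP (uniq t)) => ut; last first.
    have [s1 [z [s2 [s3 [-> u]]]]] := IH ut.
    by exists (a :: s1), z, s2, s3.
  case/splitPr: ain ut => s2 s3 ut.
  exists [::], a, s2, s3; split => //.
  by move: ut; rewrite cat_uniq /= => /and3P [-> /norP[] + _ _] => /= ->.
have [s1 [z [s2 [s3 [-> u]]]]] := IH nu.
by exists (a :: s1), z, s2, s3.
Qed.

Definition nocyc (e : rel T) (k : nat) :=
  forall c : seq T, uniq c -> cycle e c -> (3 <= size c)%N -> (k < size c)%N.

Lemma closed_zero (e : rel T) k : irreflexive e -> nocyc e k ->
  forall s x0 c, sorted e s -> (size s <= k.+1)%N -> head x0 s = last x0 s ->
  wv s c = 0.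
Proof.
move=> irr nc s; elim: {s}(size s) {-2}s (leqnn (size s)) => [|m IH] s.
  by rewrite leqn0 => /nilP ->.
move=> sm x0 c ss sk hl.
case: (boolP (uniq s)) => us.
  case: s sm ss sk hl us => [|x [|y p]] //= sm ss sk hl; first by rewrite addr0.
  rewrite hl; have : last y p \in y :: p by exact: mem_last.
  by move=> ->.
have [s1 [z [s2 [s3 [ds u]]]]] := decomp us.
move: ss; rewrite ds sorted_cat_cons => /andP [ss1].
case: s2 u ds => [|y [|y' s2]] u ds.
- by rewrite /= irr.
- move=> /= /and3P [_ _ pz].
  have -> : wv (s1 ++ [:: z, y, z & s3]) c = wv (s1 ++ z :: s3) c.
    rewrite !wv_cat; congr (_ + _) => /=.
    by rewrite (finset.setUC [set y] [set z]) addrA F2_double add0r.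
  apply: (IH _ _ x0).
  + move: sm; rewrite ds !size_cat /=; lia.
  + by rewrite sorted_cat_cons pz andbT.
  + move: sk; rewrite ds !size_cat /=; lia.
  + move: hl; rewrite ds; case: (s1) => [|a s1'] /=; rewrite ?last_cat //=.
- rewrite cat_path => /andP [p1 /= /andP [p2 _]].
  have : (k < size [:: z, y, y' & s2])%N.
    apply: nc => //; rewrite /cycle rcons_path p1 /=.
    exact: p2.
  move: sk; rewrite ds !size_cat /= size_cat /=; lia.
Qed.

Definition SE (e : rel T) :=
  [set A : {set T} | [exists x, exists y, e x y && (A == [set x; y])]].

Lemma wv_support (e : rel T) x p b : path e x p -> wv (x :: p) b != 0 -> b \in SE e.
Proof.
elim: p x => [|y p IH] x /=; first by [].
move=> /andP [exy pp]; case: (boolP (b == [set x; y])) => [/eqP -> _|nb].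
  by rewrite inE; apply/existsP; exists x; apply/existsP; exists y; rewrite exy eqxx.
by rewrite /dl (negbTE nb) add0r; apply: IH.
Qed.

Lemma rev_walk (e : rel T) : symmetric e -> forall y q, path e y q ->
  exists q', [/\ path e (last y q) q', last (last y q) q' = y, size q' = size q &
    forall c, wv (last y q :: q') c = wv (y :: q) c].
Proof.
move=> se y q pq; exists (rev (belast y q)); split.
- by rewrite rev_path (@eq_path _ _ e) // => a b /=; rewrite se.
- by case: q {pq} => [|a q] //=; rewrite rev_cons last_rcons.
- by rewrite size_rev size_belast.
- by move=> c; rewrite -rev_rcons -lastI wv_rev.
Qed.

Lemma sum_dl (v : {set T} -> {set T} -> 'F_2) B c :
  \sum_b dl B b * v b c = v B c.
Proof.
rewrite (bigD1 B) //= /dl eqxx mul1r big1 ?addr0 // => b nb.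
by rewrite (negbTE nb) mul0r.
Qed.

Lemma transfer (e1 e2 : rel T) (L : nat) (v : {set T} -> {set T} -> 'F_2) :
 (forall x y, e1 x y -> exists q, [/\ path e2 x q, last x q = y, (size q <= L)%N &
     forall c, v [set x; y] c = wv (x :: q) c]) ->
 forall x p, path e1 x p -> exists q, [/\ path e2 x q, last x q = last x p,
    (size q <= L * size p)%N &
    forall c, \sum_b wv (x :: p) b * v b c = wv (x :: q) c].
Proof.
move=> hv x p; elim: p x => [|y p IH] x.
  move=> _; exists [::]; split => // c.
  by rewrite big1 => [|b _]; rewrite wv1 ?mul0r.
case/andP => exy pp.
have [q' [pq' lq' sq' wq']] := IH y pp.
have [q1 [pq1 lq1 sq1 wq1]] := hv x y exy.
exists (q1 ++ q'); split.
- by rewrite cat_path pq1 lq1 pq'.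
- by rewrite last_cat lq1.
- by rewrite size_cat mulnS leq_add.
- move=> c.
  have -> : x :: q1 ++ q' = belast x q1 ++ y :: q' by rewrite -cat_cons lastI lq1 cat_rcons.
  rewrite wv_cat -lq1 -lastI lq1.
  under eq_bigr => b _ do rewrite mulrDl.
  by rewrite big_split sum_dl wq' wq1.
Qed.

Lemma rank_arg (SA SB : {set {set T}}) (u v : {set T} -> {set T} -> 'F_2) :
 (forall a, a \in SA -> forall c, \sum_b u a b * v b c = (c == a)%:R) ->
 (forall a b, a \in SA -> u a b != 0 -> b \in SB) -> (#|SA| <= #|SB|)%N.
Proof.
move=> huv hs.
pose A := \matrix_(i < #|SA|, j < #|SB|) u (enum_val i) (enum_val j).
pose B := \matrix_(j < #|SB|, l < #|SA|) v (enum_val j) (enum_val l).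
have AB : A *m B = 1%:M.
  apply/matrixP => i l; rewrite !mxE.
  under eq_bigr => j _ do rewrite !mxE.
  rewrite -(big_enum_val (fun b => u (enum_val i) b * v b (enum_val l))).
  rewrite -(inj_eq (@enum_val_inj _ (mem SA))) eq_sym.
  rewrite (big_mkcond (fun b => b \in SB)) /=.
  rewrite -(huv (enum_val i) (enum_valP i) (enum_val l)).
  apply: eq_bigr => b _; case: ifP => // nb.
  case: (boolP (u (enum_val i) b == 0)) => [/eqP -> | h]; first by rewrite mul0r.
  by rewrite (hs _ _ (enum_valP i) h) in nb.
have := mxrankM_maxl A B; rewrite AB mxrank1 => h.
exact: leq_trans h (rank_leq_col A).
Qed.

Lemma set2_eq (x y x' y' : T) : [set x; y] = [set x'; y'] ->
  (x' = x /\ y' = y) \/ (x' = y /\ y' = x).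
Proof.
move=> E.
have hx' : x' \in [set x; y] by rewrite E set21.
have hy' : y' \in [set x; y] by rewrite E set22.
have hx : x \in [set x'; y'] by rewrite -E set21.
have hy : y \in [set x'; y'] by rewrite -E set22.
move: hx' hy' hx hy; rewrite !in_set2.
case/orP => /eqP -> ; case/orP => /eqP ->; rewrite ?eqxx ?orbb //=.
- by move=> _ /eqP ->; left.
- by left.
- by right.
- by move=> /eqP -> _; right.
Qed.

Lemma edges_le (G H : rel T) L1 L2 : symmetric G -> irreflexive G ->
  nocyc G (L1 * L2).+1 ->
  (forall x y, H x y -> exists q, [/\ path G x q, last x q = y & (size q <= L1)%N]) ->
  (forall x y, G x y -> exists p, [/\ path H x p, last x p = y & (size p <= L2)%N]) ->
  (#|SE G| <= #|SE H|)%N.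
Proof.
move=> sG iG nc hHG hGH.
have exv : forall b : {set T}, exists fb : seq T, b \in SE H ->
    exists x y q, fb = x :: q /\ [/\ H x y, b = [set x; y], path G x q,
       last x q = y & (size q <= L1)%N].
  move=> b; case: (boolP (b \in SE H)) => hb; last by exists [::].
  move: hb; rewrite inE => /existsP [x /existsP [y /andP [hxy /eqP eb]]].
  have [q [pq lq sq]] := hHG x y hxy.
  by exists (x :: q) => _; exists x, y, q.
have [fv hfv] := choice exv.
have exu : forall b : {set T}, exists fb : seq T, b \in SE G ->
    exists x y p, fb = x :: p /\ [/\ G x y, b = [set x; y], path H x p,
       last x p = y & (size p <= L2)%N].
  move=> b; case: (boolP (b \in SE G)) => hb; last by exists [::].
  move: hb; rewrite inE => /existsP [x /existsP [y /andP [hxy /eqP eb]]].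
  have [q [pq lq sq]] := hGH x y hxy.
  by exists (x :: q) => _; exists x, y, q.
have [fu hfu] := choice exu.
apply: (rank_arg (u := fun a b => wv (fu a) b) (v := fun b c => wv (fv b) c)).
- move=> a aG c.
  have [x [y [p [-> [gxy -> pp lp sp]]]]] := hfu a aG.
  have hv : forall x' y', H x' y' -> exists q, [/\ path G x' q, last x' q = y',
       (size q <= L1)%N & forall c, wv (fv [set x'; y']) c = wv (x' :: q) c].
    move=> x' y' hxy.
    have hb : [set x'; y'] \in SE H.
      by rewrite inE; apply/existsP; exists x'; apply/existsP; exists y'; rewrite hxy eqxx.
    have [x'' [y'' [q'' [-> [_ E pq lq sq]]]]] := hfv _ hb.
    case: (set2_eq E) => [[e1 e2]|[e1 e2]]; rewrite e1 in pq lq *; rewrite e2 in lq.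
      by exists q''.
    have [q' [pq' lq' sq' wq']] := rev_walk sG pq.
    rewrite lq in pq' lq' wq'.
    by exists q'; split => //; rewrite sq'.
  have [q [pq lq sq wq]] := @transfer H G L1 (fun b c => wv (fv b) c) hv x p pp.
  rewrite wq.
  have cz := @closed_zero _ _ iG nc (rcons (x :: q) x) x c.
  rewrite wv_rcons lq lp in cz.
  move: cz; rewrite !rcons_cons /= rcons_path pq lq lp sG gxy last_rcons size_rcons /=.
  move=> /(_ isT).
  have -> : ((size q).+2 <= (L1 * L2).+2)%N.
    by rewrite !ltnS; apply: leq_trans sq _; rewrite leq_mul2l sp orbT.
  move=> /(_ isT erefl) /F2_eq ->.
  by rewrite /dl finset.setUC.
- move=> a b aG; have [x [y [p [-> [_ _ pp _ _]]]]] := hfu a aG.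
  exact: wv_support.
Qed.
End Comb.

Section Lim.
Local Open Scope ereal_scope.
Local Open Scope classical_set_scope.
Lemma einf_mono (R : realType) (u v : (\bar R)^nat) n0 :
  (forall n, (n0 <= n)%N -> u n <= v n) -> limn_einf u <= limn_einf v.
Proof.
move=> uv.
have E w : limn_einf w = ereal_sup (range (einfs w)).
  rewrite limn_einf_lim; apply/cvg_lim => //; exact: cvg_einfs_sup.
rewrite !E; apply: ge_ereal_sup => _ [n _ <-].
have h1 : einfs u n <= einfs u (maxn n n0) by apply: nondecreasing_einfs; exact: leq_maxl.
apply: (le_trans h1); apply: (@le_trans _ _ (einfs v (maxn n n0))); last first.
  by apply: ereal_sup_ubound; exists (maxn n n0).
rewrite /einfs; apply/ereal_infP => _ [k /= hk <-].
apply: (@le_trans _ _ (u k)); first by apply: ereal_inf_lbound; exists k.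
apply: uv; apply: leq_trans hk; exact: leq_maxr.
Qed.

End Lim.

Theorem theorem1 (R : realType) (V : nat -> finType) (G : forall n, rel (V n)) :
  graph_seq G -> large_girth G -> edge_number R G = cost R G.
Proof.
move=> gG lg; apply/eqP; rewrite eq_le; apply/andP; split.
- apply/ereal_infP => _ [H [gH [[L1 [L1p hHG]] [L2 [L2p hGH]]]] <-].
  have [nk hnk] := lg (L1 * L2).+1 isT.
  apply: (@einf_mono _ _ _ nk) => n nkn.
  rewrite lee_fin; apply: ler_wpM2r; first by rewrite invr_ge0 ler0n.
  rewrite ler_nat.
  have [sG iG] := gG.1 n.
  apply: (@edges_le _ (G n) (H n) L1 L2) => //.
  + by move=> c uc cc sc; apply: hnk.
  + move=> x y hxy.
    have w : walk_le (H n) x y 1 by exists [:: y]; rewrite /= hxy.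
    by have [q hq] := hHG n x y 1 w; rewrite muln1 in hq; exists q.
  + move=> x y hxy.
    have w : walk_le (G n) x y 1 by exists [:: y]; rewrite /= hxy.
    by have [q hq] := hGH n x y 1 w; rewrite muln1 in hq; exists q.
- apply: ge_ereal_inf; exists (edge_number R G); last exact: lexx.
  exists G; last by [].
  split; first exact: gG.
  by split; exists 1%N; split => // n x y k; rewrite mul1n.
Qed.
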